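(* For a positive integer $m$, let $K(m)$ denote the least positive integer $K$ such that there exist $a_1,a_2,a_3,a_4\in\mathbb{Z}$ with $m=a_1^2+a_2^2+a_3^2+a_4^2$ and, for each $i$, either $a_i=0$ or $a_i\ge \frac{\sqrt{m}}{K}$. If $n$ is an even positive integer with $K(n)=\tilde K$, then there are infinitely many positive integers $m$ with $K(m)=\tilde K$.
   Context: $K(m)$ is well defined for every positive integer $m$ by Lagrange's four-square theorem. *)

(* Defs.v *)
From Stdlib Require Import Reals ZArith Arith Lia List.
Open Scope R_scope.

Definition admissible (m K : nat) : Prop :=
  exists a1 a2 a3 a4 : Z,
    (Z.of_nat m = a1 * a1 + a2 * a2 + a3 * a3 + a4 * a4)%Z /\
    (forall a, List.In a (a1 :: a2 :: a3 :: a4 :: nil) ->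
       a = 0%Z \/ IZR a >= sqrt (INR m) / INR K).

Definition IsK (m K : nat) : Prop :=
  (0 < K)%nat /\ admissible m K /\
  (forall K', (0 < K')%nat -> admissible m K' -> (K <= K')%nat).

(* Main.v *)
Require Import Defs.
From Stdlib Require Import Reals ZArith Arith Lia Lra.

Lemma sq8 (a : Z) : exists k : Z,
  ((a*a = 8*k \/ a*a = 8*k+4) /\ Z.Even a \/ a*a = 8*k+1)%Z.
Proof.
  destruct (Z.Even_or_Odd a) as [[x ->]|[x ->]].
  - destruct (Z.Even_or_Odd x) as [[y ->]|[y ->]].
    + exists (2*y*y)%Z. left. split; [left; ring| exists (2*y)%Z; ring].
    + exists (2*y*y+2*y)%Z. left. split; [right; ring| exists (2*y+1)%Z; ring].
  - destruct (Z.Even_or_Odd x) as [[y ->]|[y ->]].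
    + exists (2*y*y+y)%Z. right. ring.
    + exists (2*y*y+3*y+1)%Z. right. ring.
Qed.

Lemma sqrt4 (m : nat) : sqrt (INR (4*m)) = 2 * sqrt (INR m).
Proof.
  rewrite mult_INR. rewrite sqrt_mult by (simpl; lra || apply pos_INR).
  replace (INR 4) with (2*2) by (simpl; lra). rewrite sqrt_square by lra. reflexivity.
Qed.

Lemma cond_eq (b : Z) (s K : R) :
  (b = 0%Z \/ IZR b >= s / K) <-> ((2*b)%Z = 0%Z \/ IZR (2*b) >= (2*s)/K).
Proof.
  rewrite mult_IZR.
  replace ((2*s)/K) with (2*(s/K)) by (unfold Rdiv; ring).
  split; intros [H|H].
  - left; lia.
  - right; lra.
  - left; lia.
  - right; lra.
Qed.

Lemma adm_equiv (m K : nat) : Nat.Even m -> (admissible m K <-> admissible (4*m) K).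
Proof.
  intros [t Ht]. unfold admissible. rewrite sqrt4. split.
  - intros (a1 & a2 & a3 & a4 & Heq & Hc).
    exists (2*a1)%Z, (2*a2)%Z, (2*a3)%Z, (2*a4)%Z. split.
    + rewrite Nat2Z.inj_mul, Heq. nia.
    + intros a Ha. simpl in Ha.
      destruct Ha as [<-|[<-|[<-|[<-|[]]]]]; apply (proj1 (cond_eq _ (sqrt (INR m)) (INR K))), Hc; simpl; tauto.
  - intros (a1 & a2 & a3 & a4 & Heq & Hc).
    rewrite Nat2Z.inj_mul, Ht, Nat2Z.inj_mul in Heq.
    destruct (sq8 a1) as [k1 H1]. destruct (sq8 a2) as [k2 H2].
    destruct (sq8 a3) as [k3 H3]. destruct (sq8 a4) as [k4 H4].
    assert (E: Z.Even a1 /\ Z.Even a2 /\ Z.Even a3 /\ Z.Even a4).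
    {
      destruct H1 as [[H1 E1]|H1]; destruct H2 as [[H2 E2]|H2];
      destruct H3 as [[H3 E3]|H3]; destruct H4 as [[H4 E4]|H4];
      try (repeat split; assumption); exfalso; lia. }
    destruct E as [[b1 ->] [[b2 ->] [[b3 ->] [b4 ->]]]].
    exists b1, b2, b3, b4. split.
    + rewrite Ht, Nat2Z.inj_mul. lia.
    + intros a Ha. simpl in Ha.
      destruct Ha as [<-|[<-|[<-|[<-|[]]]]]; apply (proj2 (cond_eq _ (sqrt (INR m)) (INR K))), Hc; simpl; tauto.
Qed.

Lemma isk_step (m K : nat) : Nat.Even m -> IsK m K -> IsK (4*m) K.
Proof.
  intros He (Hp & Ha & Hmin). split; [exact Hp|split].
  - exact (proj1 (adm_equiv m K He) Ha).
  - intros K' HK' HA. apply Hmin; [exact HK'|]. exact (proj2 (adm_equiv m K' He) HA).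
Qed.

Theorem proposition5 (n Kt : nat) :
  (0 < n)%nat -> Nat.Even n -> IsK n Kt ->
  forall N : nat, exists m : nat, (N < m)%nat /\ (0 < m)%nat /\ IsK m Kt.
Proof.
  intros Hn He HK.
  assert (G : forall k, Nat.Even (4^k*n) /\ IsK (4^k*n) Kt).
  { induction k as [|k [IH1 IH2]].
    - simpl. rewrite Nat.add_0_r. split; assumption.
    - change (4^S k)%nat with (4 * 4^k)%nat. replace (4 * 4^k * n)%nat with (4 * (4^k * n))%nat by lia. split.
      + exists (2*(4^k*n))%nat. lia.
      + apply isk_step; assumption. }
  intros N. exists (4^N*n)%nat. destruct (G N) as [_ H]. 
  assert (N < 4^N)%nat by (apply Nat.pow_gt_lin_r; lia).
  split; [nia|split; [nia|exact H]].
Qed.
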